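(* Let $\otimes$ be a $T$-norm and $\oplus$ a $T$-conorm, and let $\Phi(\oplus)(x,y)=1-((1-x)\oplus(1-y))$. If $\otimes$ and $\Phi(\oplus)$ are both Archimedean copulas, then $(\otimes,\oplus)$ satisfies the rearrangement inequality and the dual rearrangement inequality.
   Context: A uninorm is a function $\otimes:[0,1]^2\to[0,1]$ that is commutative, associative, monotonic ($x\leq y$ implies $x\otimes z\leq y\otimes z$), and has an identity element; a $T$-norm is a uninorm with identity $1$, a $T$-conorm one with identity $0$. A $T$-norm $\otimes$ is Archimedean if for all $0<x,y<1$ there exists $n$ with $x\otimes\cdots\otimes x$ ($n$ times) $\leq y$. A copula is a function $c:[0,1]^2\to[0,1]$ that satisfies neutrality of $1$, is monotonic, and satisfies: for all $0\leq x\leq y\leq1$, $0\leq z\leq w\leq1$, $c(x,w)-c(x,z)\leq c(y,w)-c(y,z)$. $(\otimes,\oplus)$ satisfies the rearrangement inequality if for every $n\geq1$, all $0\leq x_1\leq\cdots\leq x_n\leq 1$, $0\leq y_1\leq\cdots\leq y_n\leq 1$ and every permutation $\sigma$ of $\{1,\dots,n\}$, $$(x_n\otimes y_1)\oplus\cdots\oplus(x_1\otimes y_n)\leq (x_{\sigma(1)}\otimes y_1)\oplus\cdots\oplus(x_{\sigma(n)}\otimes y_n)\leq (x_1\otimes y_1)\oplus\cdots\oplus(x_n\otimes y_n),$$ and the dual rearrangement inequality if for all such data $$(x_n\oplus y_1)\otimes\cdots\otimes(x_1\oplus y_n)\geq (x_{\sigma(1)}\oplus y_1)\otimes\cdots\otimes(x_{\sigma(n)}\oplus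 y_n)\geq (x_1\oplus y_1)\otimes\cdots\otimes(x_n\oplus y_n).$$ *)

(* Defs.v *)
From HB Require Import structures.
From mathcomp Require Import all_boot all_order all_algebra perm.
From mathcomp Require Import reals.
Set Implicit Arguments. Unset Strict Implicit. Unset Printing Implicit Defensive.
Import Order.TTheory GRing.Theory Num.Theory.
Local Open Scope ring_scope.

Section Defs.
Variable R : realType.

Definition in01 (x : R) : Prop := 0 <= x <= 1.

Definition uninorm_with (op : R -> R -> R) (e : R) : Prop :=
  in01 e /\
  [/\ (forall x y, in01 x -> in01 y -> in01 (op x y)),
      (forall x y, in01 x -> in01 y -> op x y = op y x),
      (forall x y z, in01 x -> in01 y -> in01 z -> op x (op y z) = op (op x y) z),
      (forall x y z, in01 x -> in01 y -> in01 z -> x <= y -> op x z <= op y z)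
    & (forall x, in01 x -> op e x = x)].

Definition uninorm (op : R -> R -> R) : Prop := exists e, uninorm_with op e.
Definition tnorm (op : R -> R -> R) : Prop := uninorm_with op 1.
Definition tconorm (op : R -> R -> R) : Prop := uninorm_with op 0.

Definition tpow (op : R -> R -> R) (x : R) (n : nat) : R := foldr op 1 (nseq n x).

Definition archimedean_tnorm (op : R -> R -> R) : Prop :=
  tnorm op /\
  forall x y, 0 < x < 1 -> 0 < y < 1 -> exists n : nat, tpow op x n <= y.

Definition copula (c : R -> R -> R) : Prop :=
  [/\ (forall x y, in01 x -> in01 y -> in01 (c x y)),
      (forall x, in01 x -> c x 1 = x /\ c 1 x = x),
      (forall x y z, in01 x -> in01 y -> in01 z -> x <= y -> c x z <= c y z),
      (forall x y z, in01 x -> in01 y -> in01 z -> x <= y -> c z x <= c z y)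
    & (forall x y z w, 0 <= x -> x <= y -> y <= 1 -> 0 <= z -> z <= w -> w <= 1 ->
          c x w - c x z <= c y w - c y z)].

Definition archimedean_copula (c : R -> R -> R) : Prop :=
  copula c /\ archimedean_tnorm c.

Definition Phi (op : R -> R -> R) : R -> R -> R :=
  fun x y => 1 - op (1 - x) (1 - y).

(* Iterated operation a_1 op (a_2 op ( ... op a_n)); with identity e appended,
   which does not change the value since e is the identity. *)
Definition iter_op (op : R -> R -> R) (e : R) (s : seq R) : R := foldr op e s.

Definition sorted_in01 (n : nat) (x : 'I_n -> R) : Prop :=
  (forall i, in01 (x i)) /\ (forall i j : 'I_n, (i <= j)%N -> x i <= x j).

Definition rearrangement_ineq (tn tc : R -> R -> R) : Prop :=
  forall (n : nat), (0 < n)%N -> forall (x y : 'I_n -> R) (s : 'S_n),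
    sorted_in01 x -> sorted_in01 y ->
    iter_op tc 0 [seq tn (x (rev_ord i)) (y i) | i <- enum 'I_n]
      <= iter_op tc 0 [seq tn (x (s i)) (y i) | i <- enum 'I_n]
    /\ iter_op tc 0 [seq tn (x (s i)) (y i) | i <- enum 'I_n]
      <= iter_op tc 0 [seq tn (x i) (y i) | i <- enum 'I_n].

Definition dual_rearrangement_ineq (tn tc : R -> R -> R) : Prop :=
  forall (n : nat), (0 < n)%N -> forall (x y : 'I_n -> R) (s : 'S_n),
    sorted_in01 x -> sorted_in01 y ->
    iter_op tn 1 [seq tc (x (s i)) (y i) | i <- enum 'I_n]
      <= iter_op tn 1 [seq tc (x (rev_ord i)) (y i) | i <- enum 'I_n]
    /\ iter_op tn 1 [seq tc (x i) (y i) | i <- enum 'I_n]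
      <= iter_op tn 1 [seq tc (x (s i)) (y i) | i <- enum 'I_n].

End Defs.

(* Main.v *)
Require Import Defs.
From mathcomp Require Import all_boot all_order all_algebra perm.
From mathcomp Require Import classical_sets reals.
From mathcomp Require Import lra zify.
Set Implicit Arguments. Unset Strict Implicit. Unset Printing Implicit Defensive.
Import Order.TTheory GRing.Theory Num.Theory.
Local Open Scope ring_scope.

Lemma divis (R : realType) (f : R -> R) (r q : R) :
  f 0 = 0 -> f 1 = r -> 0 <= q -> q <= r ->
  (forall u v, 0 <= u -> u <= v -> v <= 1 -> f v - f u <= v - u) ->
  (forall u v, 0 <= u -> u <= v -> v <= 1 -> f u <= f v) ->
  exists w, [/\ 0 <= w, w <= 1 & f w = q].
Proof.
move=> f0 f1 q0 qr Lip mono.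
pose E : set R := fun w => 0 <= w <= 1 /\ f w <= q.
have E0 : E 0 by rewrite /E /= lexx ler01 f0.
have hs : has_sup E.
  split; first by exists 0.
  by exists 1 => x [/andP[_ ?] _].
have ub := sup_upper_bound hs.
have w0ge : 0 <= sup E by apply: ub.
have w0le : sup E <= 1.
  rewrite leNgt; apply/negP => H.
  have H' : 0 < sup E - 1 by rewrite subr_gt0.
  have [e [/andP[_ e1] _] He] := sup_adherent H' hs.
  lra.
exists (sup E); split => //.
apply/eqP; rewrite eq_le; apply/andP; split.
  rewrite leNgt; apply/negP => H.
  have H' : 0 < f (sup E) - q by rewrite subr_gt0.
  have [e Ee He] := sup_adherent H' hs.
  have eS : e <= sup E by apply: ub.
  case: Ee => /andP[e0 e1] fe.
  have := Lip _ _ e0 eS w0le.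
  lra.
rewrite leNgt; apply/negP => H.
have w1 : sup E < 1.
  rewrite lt_neqAle w0le andbT; apply/negP => /eqP E1.
  by move: H; rewrite E1 f1 ltNge qr.
pose d := Num.min (q - f (sup E)) (1 - sup E).
have d0 : 0 < d by rewrite lt_min !subr_gt0 H w1.
have d1 : d <= q - f (sup E) by rewrite ge_min lexx.
have d2 : d <= 1 - sup E by rewrite ge_min lexx orbT.
have Ed : E (sup E + d).
  split; first (apply/andP; split; lra).
  have := Lip (sup E) (sup E + d) w0ge ltac:(lra) ltac:(lra). lra.
have := ub _ Ed. lra.
Qed.
Lemma key (R : realType) (C : R -> R -> R) : tnorm C -> copula C ->
  forall p q r s, in01 p -> in01 q -> in01 r -> in01 s ->
  q <= r -> r <= p -> p + q <= r + s -> C p q <= C r s.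
Proof.
move=> [_ [cl cm ass mo id]] [_ b1 _ mo2 inc] p q r s
  /andP[p0 p1] /andP[q0 q1] /andP[r0 r1] /andP[s0 s1] qr rp pq.
have i01 : forall a : R, 0 <= a -> a <= 1 -> in01 a by move=> a ? ?; rewrite /in01; apply/andP; split.
have [w [w0 w1 Hw]] : exists w, [/\ 0 <= w, w <= 1 & C r w = q].
  apply: (divis (f := C r) (r := r) (q := q)) => //.
  - apply/eqP; rewrite eq_le; apply/andP; split.
      have z01 := i01 _ (lexx 0) ler01.
      by rewrite -{2}(id 0 z01); apply: mo => //; apply: i01.
    by have /andP[] := cl r 0 (i01 _ r0 r1) (i01 _ (lexx _) ler01).
  - exact: (b1 r (i01 _ r0 r1)).1.
  - move=> u v u0 uv v1.
    have := inc r 1 u v r0 r1 (lexx _) u0 uv v1.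
    rewrite id ?id; [lra | apply: i01 => //; lra | apply: i01 => //; lra].
  - move=> u v u0 uv v1; apply: mo2 => //; apply: i01 => //; lra.
have w01 : in01 w by apply: i01.
have Hpw : C p w <= s.
  have := inc r p w 1 r0 rp p1 w0 w1 (lexx _).
  have [-> _] := b1 r (i01 _ r0 r1).
  have [-> _] := b1 p (i01 _ p0 p1).
  lra.
have /andP[pw0 pw1] := cl p w (i01 _ p0 p1) w01.
rewrite -Hw (cm r w) ?ass //; try by apply: i01.
rewrite (cm r s) //; try by apply: i01.
by apply: mo => //; apply: i01.
Qed.
Lemma reach n (rho : 'S_n) (Rel : 'S_n -> 'S_n -> Prop) :
  (forall s, Rel s s) -> (forall a b c, Rel a b -> Rel b c -> Rel a c) ->
  (forall (s : 'S_n) (i j : 'I_n), (i < j)%N -> (forall k : 'I_n, (k < i)%N -> s k = rho k) ->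
     s i != rho i -> s j = rho i -> Rel s (tperm i j * s)%g) ->
  forall s, Rel s rho.
Proof.
move=> refl trans step s.
have : (#|[pred k | s k != rho k]| < #|[pred k | s k != rho k]|.+1)%N by [].
move: {2}#|[pred k | s k != rho k]|.+1 => m.
elim: m s => [|m IH] s //.
move=> Hc.
case: (pickP [pred k | s k != rho k]) => [i0 Hi0|H0]; last first.
  have -> : s = rho by apply/permP => k; apply/eqP; move: (H0 k) => /= /negbFE.
  exact: refl.
case: (arg_minnP (fun k : 'I_n => val k) Hi0) => i Hi Hmin.
pose j := ((s^-1)%g (rho i)).
have sj : s j = rho i by rewrite /j permKV.
have ji : j != i by apply/eqP => eji; move: Hi; rewrite /= -{1}eji sj eqxx.
have ij : (i < j)%N.
  rewrite ltn_neqAle eq_sym; apply/andP; split.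
    by apply: contra ji => /eqP /val_inj ->.
  rewrite leqNgt; apply/negP => lji.
  have : ~~ (s j != rho j).
    by apply/negP => Hj; move: (Hmin j Hj); rewrite leqNgt lji.
  by rewrite negbK sj => /eqP /perm_inj ij'; move: ji; rewrite ij' eqxx.
have lt_i : forall k : 'I_n, (k < i)%N -> s k = rho k.
  move=> k ki; apply/eqP; apply/negP => /negP Hk.
  by move: (Hmin k Hk); rewrite leqNgt ki.
apply: (trans _ _ _ (step s i j ij lt_i Hi sj)).
apply: IH.
rewrite -ltnS; apply: leq_trans Hc; rewrite ltnS.
have Hi' : s i != rho i := Hi.
rewrite (cardD1 i [pred k | s k != rho k]) [in X in (X + _)%N]inE Hi' add1n ltnS.
apply: subset_leq_card; apply/fintype.subsetP => k; rewrite !inE permM.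
case: (eqVneq k i) => [->|ki]; first by rewrite tpermL sj eqxx.
case: (eqVneq k j) => [->|kj]; last by rewrite tpermD // eq_sym.
rewrite tpermR => _ /=; rewrite sj.
by apply/eqP => /perm_inj eij; move: ji; rewrite eij eqxx.
Qed.

Section Gen.
Variables (R : realType) (op : R -> R -> R) (e : R).
Hypothesis Hu : uninorm_with op e.
Variable le2 : R -> R -> Prop.
Hypothesis le2r : forall a, le2 a a.
Hypothesis le2t : forall a b c, le2 a b -> le2 b c -> le2 a c.
Hypothesis le2m : forall u v w, in01 u -> in01 v -> in01 w -> le2 u v -> le2 (op u w) (op v w).

Lemma fold01 (I : Type) (f : I -> R) (s : seq I) :
  (forall k, in01 (f k)) -> in01 (foldr op e (map f s)).
Proof.
case: Hu => e01 [cl _ _ _ _] f01.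
by elim: s => [|b s IH] //=; apply: cl.
Qed.

Lemma pull (I : eqType) (f : I -> R) (s : seq I) a :
  uniq s -> a \in s -> (forall k, in01 (f k)) ->
  foldr op e (map f s) = op (f a) (foldr op e (map f (filter (predC1 a) s))).
Proof.
case: Hu => e01 [cl cm ass _ _] + + f01.
elim: s => [|b s IH] //= /andP[bs us].
case: (eqVneq b a) => [eba|ba].
  by subst b => _ /=; rewrite ?eqxx /= -rem_filter // rem_id.
rewrite in_cons eq_sym (negbTE ba) /= => as_; rewrite (IH us as_) /=.
rewrite !ass ?(cm (f b)) //; exact: fold01.
Qed.

Lemma swap_fold n (f f' : 'I_n -> R) (i j : 'I_n) :
  i != j -> (forall k, in01 (f k)) -> (forall k, in01 (f' k)) ->
  (forall k, k != i -> k != j -> f' k = f k) ->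
  le2 (op (f' i) (f' j)) (op (f i) (f j)) ->
  le2 (foldr op e (map f' (enum 'I_n))) (foldr op e (map f (enum 'I_n))).
Proof.
case: Hu => e01 [cl cm ass _ _] ij f01 f'01 eqf H.
have ui := enum_uniq 'I_n.
have iin : i \in enum 'I_n by rewrite mem_enum.
have u1 : uniq (filter (predC1 i) (enum 'I_n)) by rewrite filter_uniq.
have jin : j \in filter (predC1 i) (enum 'I_n) by rewrite mem_filter /= eq_sym ij mem_enum.
rewrite (pull (f:=f') ui iin) // (pull (f:=f) ui iin) // (pull (f:=f') u1 jin) // (pull (f:=f) u1 jin) //.
have -> : [seq f' k | k <- [seq x <- [seq x <- enum 'I_n | predC1 i x] | predC1 j x]]
   = [seq f k | k <- [seq x <- [seq x <- enum 'I_n | predC1 i x] | predC1 j x]].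
  apply/eq_in_map => k; rewrite !mem_filter /= => /andP[kj /andP[ki _]].
  exact: eqf.
rewrite !ass //; try exact: fold01.
apply: le2m => //; [exact: cl | exact: cl | exact: fold01].
Qed.


Variable g : R -> R -> R.
Hypothesis g01 : forall u v, in01 u -> in01 v -> in01 (g u v).
Hypothesis sw : forall a b c d, in01 a -> in01 b -> in01 c -> in01 d ->
  a <= b -> c <= d -> le2 (op (g b c) (g a d)) (op (g a c) (g b d)).

Lemma gen n (x y : 'I_n -> R) (s : 'S_n) :
  sorted_in01 x -> sorted_in01 y ->
  le2 (foldr op e [seq g (x (s k)) (y k) | k <- enum 'I_n])
      (foldr op e [seq g (x k) (y k) | k <- enum 'I_n]) /\
  le2 (foldr op e [seq g (x (rev_ord k)) (y k) | k <- enum 'I_n])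
      (foldr op e [seq g (x (s k)) (y k) | k <- enum 'I_n]).
Proof.
move=> [x01 xs] [y01 ys].
pose F (t : 'S_n) := foldr op e [seq g (x (t k)) (y k) | k <- enum 'I_n].
have f01 : forall (t : 'S_n) k, in01 (g (x (t k)) (y k)) by move=> t k; apply: g01.
have neq : forall (i j : 'I_n), (i < j)%N -> i != j.
  by move=> i j ij; apply/eqP => eij; move: ij; rewrite eij ltnn.
have eqo : forall (t : 'S_n) (i j k : 'I_n), k != i -> k != j ->
    g (x ((tperm i j * t)%g k)) (y k) = g (x (t k)) (y k).
  by move=> t i j k ki kj; rewrite permM tpermD // eq_sym.
split.
- have := @reach n 1%g (fun a b => le2 (F a) (F b)) (fun a => le2r _)
     (fun a b c h1 h2 => le2t h1 h2).
  have -> : F 1%g = foldr op e [seq g (x k) (y k) | k <- enum 'I_n].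
    by rewrite /F; congr foldr; apply/eq_map => k; rewrite perm1.
  apply => t i j ij lt_i Hi sj.
  apply: (@swap_fold n (fun k => g (x ((tperm i j * t)%g k)) (y k))
                       (fun k => g (x (t k)) (y k)) i j (neq _ _ ij)) => //.
    by move=> k ki kj; rewrite eqo.
  rewrite !permM tpermL tpermR sj perm1.
  apply: sw => //; last by apply: ys; apply: ltnW.
  apply: xs; rewrite leqNgt; apply/negP => H.
  have := lt_i (t i) H; rewrite perm1 => /perm_inj eti.
  by move: Hi; rewrite eti perm1 eqxx.
- pose rho := perm (@rev_ord_inj n).
  have := @reach n rho (fun a b => le2 (F b) (F a)) (fun a => le2r _)
     (fun a b c h1 h2 => le2t h2 h1).
  have -> : F rho = foldr op e [seq g (x (rev_ord k)) (y k) | k <- enum 'I_n].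
    by rewrite /F; congr foldr; apply/eq_map => k; rewrite permE.
  apply => t i j ij lt_i Hi sj.
  apply: (@swap_fold n (fun k => g (x (t k)) (y k))
                       (fun k => g (x ((tperm i j * t)%g k)) (y k)) i j (neq _ _ ij)) => //.
    by move=> k ki kj; rewrite eqo.
  rewrite !permM tpermL tpermR sj.
  apply: sw => //; last by apply: ys; apply: ltnW.
  apply: xs; rewrite /rho permE leqNgt; apply/negP => H.
  have kl : (rev_ord (t i) < i)%N.
    have H2 : (n - i.+1 < t i)%N := H.
    rewrite /= subnS. have := ltn_ord (t i); have := ltn_ord i. lia.
  have := lt_i _ kl; rewrite /rho permE rev_ordK => /perm_inj eti.
  by move: kl; rewrite eti /= ; have := ltn_ord i; lia.
Qed.

End Gen.

Lemma i01 (R : realType) (a : R) : 0 <= a -> a <= 1 -> in01 a.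
Proof. by move=> ? ?; rewrite /in01; apply/andP; split. Qed.

Lemma c01 (R : realType) (a : R) : in01 a -> in01 (1 - a).
Proof. move=> /andP[? ?]; apply: i01; lra. Qed.

Lemma PhiE (R : realType) (tc : R -> R -> R) u v : tc u v = 1 - Phi tc (1 - u) (1 - v).
Proof.
rewrite /Phi; have h : forall z : R, 1 - (1 - z) = z by move=> z; lra.
rewrite !h; lra.
Qed.

Lemma swapA (R : realType) (tn tc : R -> R -> R) :
  tnorm tn -> copula tn -> tnorm (Phi tc) -> copula (Phi tc) ->
  forall a b c d, in01 a -> in01 b -> in01 c -> in01 d -> a <= b -> c <= d ->
  tc (tn b c) (tn a d) <= tc (tn a c) (tn b d).
Proof.
move=> tT [clT _ moT mo2T incT] tP cP a b c d a01 b01 c01' d01 ab cd.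
have p01 := clT _ _ a01 c01'; have q01 := clT _ _ b01 d01.
have r01 := clT _ _ b01 c01'; have s01 := clT _ _ a01 d01.
rewrite !(PhiE tc).
suff : Phi tc (1 - tn a c) (1 - tn b d) <= Phi tc (1 - tn b c) (1 - tn a d) by lra.
have rq := mo2T _ _ _ c01' d01 b01 cd.
have pr := moT _ _ _ a01 b01 c01' ab.
have inc := incT a b c d.
move: a01 b01 c01' d01 => /andP[? ?] /andP[? ?] /andP[? ?] /andP[? ?].
apply: key => //; try exact: c01; try lra.
Qed.

Lemma swapB (R : realType) (tn tc : R -> R -> R) :
  tnorm tn -> copula tn -> tconorm tc -> tnorm (Phi tc) -> copula (Phi tc) ->
  forall a b c d, in01 a -> in01 b -> in01 c -> in01 d -> a <= b -> c <= d ->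
  tn (tc a c) (tc b d) <= tn (tc b c) (tc a d).
Proof.
move=> tT cT [_ [clS cmS _ moS _]] tP [_ _ _ _ incP] a b c d a01 b01 c01' d01 ab cd.
have p01 := clS _ _ a01 c01'; have q01 := clS _ _ b01 d01.
have r01 := clS _ _ b01 c01'; have s01 := clS _ _ a01 d01.
have pr := moS _ _ _ a01 b01 c01' ab.
have rq : tc b c <= tc b d by rewrite (cmS b) // (cmS b) //; apply: moS.
have ps : tc a c <= tc a d by rewrite (cmS a) // (cmS a) //; apply: moS.
have inc := incP (1 - b) (1 - a) (1 - d) (1 - c).
move: a01 b01 c01' d01 => /andP[? ?] /andP[? ?] /andP[? ?] /andP[? ?].
have h : forall z : R, 1 - (1 - z) = z by move=> z; lra.
have {}inc : tc b d - tc b c <= tc a d - tc a c.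
  suff : Phi tc (1 - b) (1 - c) - Phi tc (1 - b) (1 - d) <=
         Phi tc (1 - a) (1 - c) - Phi tc (1 - a) (1 - d).
    by rewrite /Phi !h => H; lra.
  by apply: inc; lra.
have [_ [_ cmT _ _ _]] := tT.
rewrite cmT //.
by apply: (key tT cT) => //; lra.
Qed.

Theorem theorem9 (R : realType) (tn tc : R -> R -> R) :
  tnorm tn -> tconorm tc ->
  archimedean_copula tn -> archimedean_copula (Phi tc) ->
  rearrangement_ineq tn tc /\ dual_rearrangement_ineq tn tc.
Proof.
move=> Htn Htc [cT _] [cP [tP _]].
have Htn' := Htn; have Htc' := Htc.
case: Htn' => _ [clT _ _ moT _]; case: Htc' => _ [clS _ _ moS _].
split => n _ x y s sx sy; rewrite /iter_op.
- have [h1 h2] := @gen R tc 0 Htc (fun a b => a <= b) (fun a => lexx a)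
     (fun a b c h1 h2 => le_trans h1 h2) moS tn clT
     (swapA Htn cT tP cP) n x y s sx sy.
  by split.
- have [h1 h2] := @gen R tn 1 Htn (fun a b => b <= a) (fun a => lexx a)
     (fun a b c h1 h2 => le_trans h2 h1)
     (fun u v w u01 v01 w01 h => moT v u w v01 u01 w01 h) tc clS
     (swapB Htn cT Htc tP cP) n x y s sx sy.
  by split.
Qed.
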